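(* Let $B \in \mathbb{R}^{n \times m}$, $c \in \mathbb{R}^m_>$, and let $C = C_1 \times \cdots \times C_\ell \subseteq \mathbb{R}^m_>$ be a nonempty cone with cones $C_i \subseteq \mathbb{R}^{m_i}_>$, $m_1+\cdots+m_\ell=m$. With $P$, $L$, $M$, $I$, $d$ as in the context, let $M^*$ be any generalized inverse of $M$ ($MM^*M=M$) and $E = I M^*$. If $d = 0$, then \[ Z_c := \{x\in\mathbb{R}^n_> \mid (c\circ x^B)\in C\} = \{ (y\circ c^{-1})^E \mid y \in P\} \circ e^{L^\perp}; \] in particular, $Z_c \neq \emptyset$ for every $c \in \mathbb{R}^m_>$. Moreover, $Z_c$ consists of exactly one point if and only if $\dim P = 0$ and $\dim L^\perp = 0$.
   Context: Notation: for $x\in\mathbb{R}^n_>$, $y\in\mathbb{R}^n$, $x^y=\prod_i x_i^{y_i}$; for $Y=(y^1,\ldots,y^m)$, $(x^Y)_j=x^{y^j}$; $\circ$ is the componentwise product, $c^{-1}$ componentwise inverse, $S\circ e^{V}=\{s\circ e^v\mid s\in S, v\in V\}$. A cone is a set closed under positive scaling. The partition splits indices into $\ell$ consecutive classes, $B=(B_1\ \cdots\ B_\ell)$. $\Delta=\Delta_{m_1-1}\times\cdots\times\Delta_{m_\ell-1}$ with $\Delta_{m_i-1}=\{y\in\mathbb{R}^{m_i}_{\ge}\mid\sum_j y_j=1\}$; $P=C\cap\Delta$ (its dimension is that of its affine hull). $I_k=\begin{pmatrix}\mathrm{id}_{k-1}\\-1_{k-1}^{\mathsf T}\end{pmatrix}$,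 $I=\mathrm{diag}(I_{m_1},\ldots,I_{m_\ell})\in\mathbb{R}^{m\times(m-\ell)}$, $M=BI$, $L=\operatorname{im}M$, $d=\dim\ker M$. *)

(* Defs.v *)
From HB Require Import structures.
From mathcomp Require Import all_boot all_order all_algebra.
From mathcomp Require Import all_classical all_reals all_analysis.
Set Implicit Arguments. Unset Strict Implicit. Unset Printing Implicit Defensive.
Import Order.TTheory GRing.Theory Num.Theory.
Local Open Scope classical_set_scope.
Local Open Scope ring_scope.

Section Defs.
Variable R : realType.

Definition posv k (x : 'cV[R]_k) : Prop := forall i, 0 < x i 0.

Definition hadm k (x y : 'cV[R]_k) : 'cV[R]_k := \col_i (x i 0 * y i 0).
Definition invv k (x : 'cV[R]_k) : 'cV[R]_k := \col_i (x i 0)^-1.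
Definition expv k (x : 'cV[R]_k) : 'cV[R]_k := \col_i expR (x i 0).

Definition mpow p q (x : 'cV[R]_p) (Y : 'M[R]_(p, q)) : 'cV[R]_q :=
  \col_j \prod_(i < p) ((x i 0) `^ (Y i j)).

Definition is_cone k (S : set 'cV[R]_k) : Prop :=
  forall t y, 0 < t -> S y -> S (t *: y).

Variables (l : nat) (ms : 'I_l -> nat).
Local Notation m := (\sum_(i < l) ms i)%N.
Local Notation m' := (\sum_(i < l) (ms i).-1)%N.

Definition blk (i : 'I_l) (y : 'cV[R]_m) : 'cV[R]_(ms i) :=
  \col_(a < ms i) y (tagnat.Rank i a) 0.

Definition prodC (Cs : forall i : 'I_l, set 'cV[R]_(ms i)) : set 'cV[R]_m :=
  [set y | forall i, Cs i (blk i y)].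

Definition simplex k (y : 'cV[R]_k) : Prop :=
  (forall a, 0 <= y a 0) /\ \sum_(a < k) y a 0 = 1.
Definition Delta : set 'cV[R]_m := [set y | forall i, simplex (blk i y)].

Definition Pset Cs : set 'cV[R]_m := prodC Cs `&` Delta.

(* I = diag(I_{m_1}, ..., I_{m_l}), I_k = (id_{k-1} ; -1^T) *)
Definition Imx : 'M[R]_(m, m') :=
  \matrix_(r, s)
    let i := tagnat.sig1 r in let a := tagnat.sig2 r in
    let j := tagnat.sig1 s in let b := tagnat.sig2 s in
    if i == j then
      (if (a : nat) == (b : nat) then 1
       else if (a : nat) == (ms i).-1 then -1 else 0)
    else 0.

End Defs.

Definition imcols (R : realType) p q (M : 'M[R]_(p, q)) : set 'cV[R]_p :=
  [set w | exists u : 'cV[R]_q, w = M *m u].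
Definition orthc (R : realType) p (S : set 'cV[R]_p) : set 'cV[R]_p :=
  [set v | forall w, S w -> v^T *m w = 0].

(* dimension of the kernel of M : 'M_(p,q): kermx M^T has as row space
   {u : 'rV_q | u *m M^T = 0} = (ker M)^T *)
Definition dimker (R : realType) p q (M : 'M[R]_(p, q)) : nat := \rank (kermx M^T).
(* dimension of (im M)^perp: kermx M has row space {v : 'rV_p | v *m M = 0},
   i.e. the transposes of the v with v ⊥ im M *)
Definition dimorth_im (R : realType) p q (M : 'M[R]_(p, q)) : nat := \rank (kermx M).

(* dimension of (the affine hull of) a set S of R^k is k0 :
   S nonempty, there are k0 linearly independent differences of points of S,
   and no k0+1 such differences are linearly independent *)
Definition diffs (R : realType) k r0 (S : set 'cV[R]_k) (A : 'M[R]_(r0, k)) : Prop :=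
  forall r, exists p q, S p /\ S q /\ row r A = (p - q)^T.
Definition is_affdim (R : realType) k (S : set 'cV[R]_k) (k0 : nat) : Prop :=
  (exists p, S p) /\
  (exists A : 'M[R]_(k0, k), diffs S A /\ row_free A) /\
  (forall A : 'M[R]_(k0.+1, k), diffs S A -> ~~ row_free A).

(* Main.v *)
Require Import Defs.
From HB Require Import structures.
From mathcomp Require Import all_boot all_order all_algebra.
From mathcomp Require Import all_classical all_reals all_analysis.
From mathcomp Require Import ring.
Import Order.TTheory GRing.Theory Num.Theory.
Local Open Scope classical_set_scope.
Local Open Scope ring_scope.
Set Implicit Arguments. Unset Strict Implicit.

Section Vec.
Variable R : realType.
Definition lnv k (x : 'cV[R]_k) : 'cV[R]_k := \col_i ln (x i 0).

Lemma expv_pos k (v : 'cV[R]_k) : posv (expv v).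
Proof. by move=> i; rewrite mxE expR_gt0. Qed.

Lemma expvK k (x : 'cV[R]_k) : posv x -> expv (lnv x) = x.
Proof. by move=> hx; apply/matrixP=> i j; rewrite (ord1 j) !mxE lnK // posrE. Qed.

Lemma lnvK k (v : 'cV[R]_k) : lnv (expv v) = v.
Proof. by apply/matrixP=> i j; rewrite (ord1 j) !mxE expRK. Qed.

Lemma hadm_expv k (a b : 'cV[R]_k) : hadm (expv a) (expv b) = expv (a + b).
Proof. by apply/matrixP=> i j; rewrite !mxE expRD. Qed.

Lemma posv_hadm k (x y : 'cV[R]_k) : posv x -> posv y -> posv (hadm x y).
Proof. by move=> hx hy i; rewrite mxE mulr_gt0. Qed.

Lemma posv_invv k (x : 'cV[R]_k) : posv x -> posv (invv x).
Proof. by move=> hx i; rewrite mxE invr_gt0. Qed.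

Lemma mpowE p q (x : 'cV[R]_p) (Y : 'M[R]_(p, q)) :
  posv x -> mpow x Y = expv (Y^T *m lnv x).
Proof.
move=> hx; apply/matrixP=> j k; rewrite !mxE expR_sum; apply: eq_bigr => i _.
rewrite !mxE /powR gt_eqF // mulrC.
Qed.

Lemma lnv_hadm k (x y : 'cV[R]_k) : posv x -> posv y -> lnv (hadm x y) = lnv x + lnv y.
Proof. by move=> hx hy; apply/matrixP=> i j; rewrite !mxE lnM // posrE. Qed.

Lemma lnv_invv k (x : 'cV[R]_k) : posv x -> lnv (invv x) = - lnv x.
Proof. by move=> hx; apply/matrixP=> i j; rewrite !mxE lnV // posrE. Qed.

Lemma expv_inj k : injective (@expv R k).
Proof. by move=> a b h; rewrite -(lnvK a) h lnvK. Qed.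
End Vec.
Section Blocks.
Variable R : realType.
Variables (l : nat) (ms : 'I_l -> nat).
Hypothesis hms : forall i, (0 < ms i)%N.
Local Notation m := (\sum_(i < l) ms i)%N.
Local Notation m' := (\sum_(i < l) (ms i).-1)%N.

Lemma lst_lt j : ((ms j).-1 < ms j)%N.
Proof. by rewrite prednK. Qed.
Definition lst j : 'I_(ms j) := Ordinal (lst_lt j).

Definition RK (i : 'I_l) (a : 'I_(ms i)) : 'I_m := @tagnat.Rank l ms i a.
Definition RK' (i : 'I_l) (b : 'I_((ms i).-1)) : 'I_m' :=
  @tagnat.Rank l (fun i => (ms i).-1) i b.

Lemma eqRK r j (a : 'I_(ms j)) :
  (r == RK a) = (tagnat.sig1 r == j) && (tagnat.sig2 r == a :> nat).
Proof. by rewrite -val_eqE /RK -{1}(tagnat.sig2K r) tagnat.eq_Rank. Qed.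

Lemma ImxE r j (b : 'I_((ms j).-1)) :
  Imx R ms r (RK' b) =
  (r == RK (widen_ord (leq_pred _) b))%:R - (r == RK (lst j))%:R.
Proof.
rewrite mxE /RK' tagnat.Rank2K /= tagnat.Rank1K !eqRK /=.
case: (tagnat.sig1 r =P j) => [e|_] /=; last by rewrite subrr.
have -> : (ms (tagnat.sig1 r)).-1 = (ms j).-1 by rewrite e.
have hb := ltn_ord b.
case: eqP => h1; case: eqP => h2 //=; rewrite ?subr0 ?sub0r //.
by exfalso; move: hb; rewrite -h1 h2 ltnn.
Qed.

Lemma sum_delta n (F : 'I_n -> R) j : \sum_i (i == j)%:R * F i = F j.
Proof.
rewrite (bigD1 j) //= eqxx mulr1n mul1r big1 ?addr0 // => i /negbTE ->.
by rewrite mul0r.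
Qed.

Lemma ITw (w : 'cV[R]_m) j (b : 'I_((ms j).-1)) :
  ((Imx R ms)^T *m w) (RK' b) 0 =
  w (RK (widen_ord (leq_pred _) b)) 0 - w (RK (lst j)) 0.
Proof.
rewrite mxE.
under eq_bigr => r _ do rewrite mxE ImxE mulrBl.
by rewrite sumrB !sum_delta.
Qed.

Lemma IT0_const (w : 'cV[R]_m) : (Imx R ms)^T *m w = 0 ->
  forall i (a : 'I_(ms i)), w (RK a) 0 = w (RK (lst i)) 0.
Proof.
move=> h i a.
case: (ltnP a (ms i).-1) => ha.
  have := ITw w (Ordinal ha); rewrite h mxE => /esym/eqP; rewrite subr_eq0 => /eqP.
  by have -> : widen_ord (leq_pred (ms i)) (Ordinal ha) = a by apply: val_inj.
have -> // : a = lst i.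
apply: val_inj => /=; have h2 : (a <= (ms i).-1)%N by rewrite -ltnS prednK.
by apply/eqP; rewrite eqn_leq h2 ha.
Qed.

Lemma const_IT0 (w : 'cV[R]_m) (lam : 'I_l -> R) :
  (forall i (a : 'I_(ms i)), w (RK a) 0 = lam i) -> (Imx R ms)^T *m w = 0.
Proof.
move=> h; apply/matrixP=> s k; rewrite (ord1 k) [RHS]mxE.
rewrite -(tagnat.sig2K s); have := ITw w (tagnat.sig2 s); rewrite /RK' => ->.
by rewrite !h subrr.
Qed.

Lemma vec_blkP (y z : 'cV[R]_m) : (forall i, blk i y = blk i z) -> y = z.
Proof.
move=> h; apply/matrixP=> r k; rewrite (ord1 k) -(tagnat.sig2K r).
by have /matrixP/(_ (tagnat.sig2 r) 0) := h (tagnat.sig1 r); rewrite !mxE.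
Qed.

Lemma blkE i (y : 'cV[R]_m) a : blk i y a 0 = y (RK a) 0.
Proof. by rewrite mxE. Qed.
End Blocks.

Theorem corollary6 (R : realType) (n l : nat) (ms : 'I_l -> nat)
  (hms : forall i, (0 < ms i)%N)
  (B : 'M[R]_(n, \sum_(i < l) ms i))
  (c : 'cV[R]_(\sum_(i < l) ms i)) (hc : posv c)
  (Cs : forall i : 'I_l, set 'cV[R]_(ms i))
  (hcone : forall i, is_cone (Cs i))
  (hCpos : forall i y, Cs i y -> posv y)
  (hCne : exists y, prodC Cs y)
  (Mg : 'M[R]_(\sum_(i < l) (ms i).-1, n))
  (hMg : (B *m Imx R ms) *m Mg *m (B *m Imx R ms) = B *m Imx R ms) :
  let M := B *m Imx R ms in
  let E := Imx R ms *m Mg in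
  let Zc := [set x : 'cV[R]_n | posv x /\ prodC Cs (hadm c (mpow x B))] in
  dimker M = 0%N ->
  [/\ Zc = [set z | exists y v, Pset Cs y /\ orthc (imcols M) v /\
                      z = hadm (mpow (hadm y (invv c)) E) (expv v)],
      Zc !=set0 &
      ((exists x0, Zc = [set x0]) <->
         (is_affdim (Pset Cs) 0 /\ dimorth_im M = 0%N))].
Proof.
move=> M E Zc hd.
have hMg' : M *m Mg *m M = M := hMg.
have posP : forall y, prodC Cs y -> posv y.
  move=> y hy r; rewrite -(tagnat.sig2K r).
  by have := hCpos _ _ (hy (tagnat.sig1 r)) (tagnat.sig2 r); rewrite mxE.
have hMgM : Mg *m M = 1%:M.
  have hk : kermx M^T = 0 by apply/eqP; rewrite -mxrank_eq0; apply/eqP.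
  apply/eqP; rewrite -subr_eq0; apply/eqP; apply: trmx_inj; rewrite trmx0.
  have h1 : ((Mg *m M - 1%:M)^T <= kermx M^T)%MS.
    by apply/sub_kermxP; rewrite -trmx_mul mulmxBr mulmx1 mulmxA hMg' subrr trmx0.
  by rewrite hk in h1; exact: submx0null h1.
have hMET : M^T *m E^T = (Imx R ms)^T.
  by rewrite -trmx_mul /E -mulmxA hMgM mulmx1.
have orthE : forall v, orthc (imcols M) v <-> M^T *m v = 0.
  move=> v; split.
  - move=> hv; apply: trmx_inj; rewrite trmx_mul trmxK trmx0.
    apply/matrixP=> a b; rewrite (ord1 a).
    have h := hv (M *m delta_mx b 0) (ex_intro _ _ erefl).
    rewrite mulmxA -colE in h.
    move: h => /matrixP/(_ 0 0); rewrite !mxE; exact: id.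
  - move=> hv w [u ->]; rewrite mulmxA.
    have -> : v^T *m M = (M^T *m v)^T by rewrite trmx_mul trmxK.
    by rewrite hv trmx0 mul0mx.
pose w y := lnv (hadm y (invv c)).
have PhiE : forall y v, posv y ->
    hadm (mpow (hadm y (invv c)) E) (expv v) = expv (E^T *m w y + v).
  move=> y v hy; rewrite mpowE ?hadm_expv //.
  exact: posv_hadm hy (posv_invv hc).
have K1 : forall y v, posv y -> M^T *m v = 0 ->
   exists lam : 'I_l -> R, forall i,
     blk i (hadm c (mpow (expv (E^T *m w y + v)) B)) = expR (lam i) *: blk i y.
  move=> y v hy hv.
  set u := B^T *m (E^T *m w y + v) - w y.
  have hu : (Imx R ms)^T *m u = 0.
    rewrite /u mulmxBr mulmxA -trmx_mul -/M mulmxDr mulmxA hMET hv addr0.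
    by rewrite subrr.
  have eu : B^T *m (E^T *m w y + v) = u + w y by rewrite /u subrK.
  clearbody u.
  exists (fun i => u (RK (lst hms i)) 0) => i.
  rewrite mpowE; last exact: expv_pos.
  rewrite lnvK eu.
  apply/matrixP=> a k; rewrite (ord1 k) !mxE.
  rewrite -(IT0_const hms hu a) /RK expRD lnK; last first.
    by rewrite posrE mulr_gt0 // invr_gt0.
  have hc0 : c (tagnat.Rank i a) 0 != 0 by rewrite gt_eqF.
  by field.
have sub1 : forall y v, Pset Cs y -> orthc (imcols M) v ->
    Zc (hadm (mpow (hadm y (invv c)) E) (expv v)).
  move=> y v [hyC hyD] /orthE hv.
  have hy := posP _ hyC.
  rewrite PhiE //; split; first exact: expv_pos.
  have [lam hlam] := K1 _ _ hy hv.
  move=> i; rewrite hlam; apply: hcone; [exact: expR_gt0 | exact: hyC].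
have normP : forall z, prodC Cs z -> exists y, Pset Cs y /\
    exists t : 'I_l -> R, (forall i, 0 < t i) /\
      (forall i (a : 'I_(ms i)), y (RK a) 0 = t i * z (RK a) 0).
  move=> z hz.
  have zpos := posP _ hz.
  pose s i := \sum_(a < ms i) z (RK a) 0.
  have spos : forall i, 0 < s i.
    move=> i; rewrite /s (bigD1 (lst hms i)) //=.
    apply: (lt_le_trans (zpos (RK (lst hms i)))); rewrite lerDl.
    by apply: sumr_ge0 => a _; exact: ltW.
  pose y := \col_r (z r 0 / s (tagnat.sig1 r)).
  have yE : forall i (a : 'I_(ms i)), y (RK a) 0 = (s i)^-1 * z (RK a) 0.
    by move=> i a; rewrite mxE /RK tagnat.Rank1K mulrC.
  have blky : forall i, blk i y = (s i)^-1 *: blk i z.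
    move=> i; apply/matrixP=> a k; rewrite (ord1 k) !mxE.
    by rewrite tagnat.Rank1K mulrC.
  exists y; split; last by exists (fun i => (s i)^-1); split => // i; rewrite invr_gt0.
  split.
    by move=> i; rewrite blky; apply: hcone; [rewrite invr_gt0|exact: hz].
  move=> i; rewrite blky; split.
    move=> a; rewrite !mxE; apply: mulr_ge0; first by rewrite invr_ge0 ltW.
    exact: ltW (zpos _).
  under eq_bigr do rewrite !mxE.
  by rewrite -mulr_sumr mulVf ?gt_eqF.
have sub2 : forall x, Zc x -> exists y v, Pset Cs y /\ orthc (imcols M) v /\
     x = hadm (mpow (hadm y (invv c)) E) (expv v).
  move=> x [hx hz].
  have [y [hyP [t [tpos hyt]]]] := normP _ hz.
  have hy := posP _ hyP.1.
  exists y, (lnv x - E^T *m w y); split => //; split; last first.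
    by rewrite PhiE // addrCA subrr addr0 expvK.
  apply/orthE.
  rewrite mulmxBr mulmxA hMET /M trmx_mul -mulmxA -mulmxBr.
  apply: (const_IT0 hms (lam := fun i => - ln (t i))) => i a.
  rewrite mpowE // in hyt.
  have -> : (B^T *m lnv x - w y) (RK a) 0 = (B^T *m lnv x) (RK a) 0 - w y (RK a) 0.
    by rewrite !mxE.
  have -> : w y (RK a) 0 = ln (y (RK a) 0 * (c (RK a) 0)^-1) by rewrite !mxE.
  rewrite hyt.
  have -> : hadm c (expv (B^T *m lnv x)) (RK a) 0 =
     c (RK a) 0 * expR ((B^T *m lnv x) (RK a) 0) by rewrite !mxE.
  have hc0 : c (RK a) 0 != 0 by rewrite gt_eqF.
  set e := (B^T *m lnv x) (RK a) 0.
  have -> : t i * (c (RK a) 0 * expR e) * (c (RK a) 0)^-1 = t i * expR e.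
    by field.
  rewrite lnM ?posrE ?expR_gt0 // expRK.
  by rewrite opprD addrCA subrr addr0.
have hP0 : exists y0, Pset Cs y0.
  by have [z hz] := hCne; have [y [hy _]] := normP _ hz; exists y.
have U : forall y1 y2 v1 v2, Pset Cs y1 -> Pset Cs y2 ->
    M^T *m v1 = 0 -> M^T *m v2 = 0 ->
    expv (E^T *m w y1 + v1) = expv (E^T *m w y2 + v2) -> y1 = y2.
  move=> y1 y2 v1 v2 [hC1 hD1] [hC2 hD2] hv1 hv2 he.
  have [l1 h1] := K1 _ _ (posP _ hC1) hv1.
  have [l2 h2] := K1 _ _ (posP _ hC2) hv2.
  apply: (vec_blkP (R := R)) => i.
  have h := h2 i; rewrite -he h1 in h.
  have e12 : expR (l1 i) = expR (l2 i).
    have := congr1 (fun A : 'cV[R]_(ms i) => \sum_a A a 0) h => /=.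
    under eq_bigr do rewrite mxE.
    under [in X in _ = X -> _]eq_bigr do rewrite mxE.
    by rewrite -!mulr_sumr (hD1 i).2 (hD2 i).2 !mulr1.
  rewrite e12 in h; apply/matrixP=> a k.
  have := congr1 (fun A : 'cV[R]_(ms i) => A a k) h => /=; rewrite !mxE.
  by apply: mulfI; rewrite gt_eqF // expR_gt0.
have part1 : Zc = [set z | exists y v, Pset Cs y /\ orthc (imcols M) v /\
                      z = hadm (mpow (hadm y (invv c)) E) (expv v)].
  apply/seteqP; split => x /=; first exact: sub2.
  by move=> [y [v [hy [hv ->]]]]; exact: sub1.
split => //.
  have [y0 hy0] := hP0; exists (hadm (mpow (hadm y0 (invv c)) E) (expv 0)).
  by apply: sub1 => //; apply/orthE; rewrite mulmx0.
have z0 : M^T *m (0 : 'cV[R]_n) = 0 by rewrite mulmx0.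
have Phi0 : forall y v, Pset Cs y -> M^T *m v = 0 -> Zc (expv (E^T *m w y + v)).
  move=> y v hy hv; rewrite -PhiE; last exact: (posP _ hy.1).
  by apply: sub1 => //; apply/orthE.
split.
- move=> [x0 hx0].
  have [y0 hy0] := hP0.
  have inZ : forall y v, Pset Cs y -> M^T *m v = 0 -> expv (E^T *m w y + v) = x0.
    by move=> y v hy hv; have := Phi0 _ _ hy hv; rewrite hx0.
  split.
  + split; first by exists y0.
    split.
      exists 0; split; first by move=> [].
      rewrite /row_free.
      by have := rank_leq_row (0 : 'M[R]_(0, \sum_(i<l) ms i)); rewrite leqn0.
    move=> A hA; have [p [q [hp [hq hr]]]] := hA 0.
    have epq : p = q.
      by apply: (U p q 0 0 hp hq z0 z0); rewrite !inZ.
    rewrite epq subrr trmx0 in hr.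
    have A0 : A = 0.
      apply/matrixP=> a b; rewrite (ord1 a).
      by have := congr1 (fun X : 'rV[R]_(\sum_(i<l) ms i) => X 0 b) hr; rewrite /= !mxE.
    by rewrite A0 /row_free mxrank0.
  + apply/eqP; rewrite mxrank_eq0; apply/eqP; apply/row_matrixP => k; rewrite row0.
    set r := row k (kermx M).
    have hv : M^T *m r^T = 0.
      by rewrite -trmx_mul /r -row_mul mulmx_ker row0 trmx0.
    have := inZ y0 _ hy0 hv; rewrite -(inZ y0 0 hy0 z0) => /expv_inj /addrI h.
    by rewrite -[r]trmxK h trmx0.
- move=> [[[y0 hy0] [_ hA]] hdim].
  have Puniq : forall p q, Pset Cs p -> Pset Cs q -> p = q.
    move=> p q hp hq; apply/eqP; rewrite -subr_eq0; apply/eqP; apply: (@trmx_inj _ _ _ (p - q) 0).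
    rewrite trmx0.
    have hd' : diffs (Pset Cs) (p - q)^T.
      move=> r; exists p, q; split => //; split => //.
      by rewrite (ord1 r); apply/matrixP => a b; rewrite (ord1 a) !mxE.
    have := hA _ hd'; rewrite /row_free => h.
    apply/eqP; rewrite -mxrank_eq0.
    by move: h; have := rank_leq_row ((p - q)^T); case: (\rank _) => [|[|k]].
  have hk : kermx M = 0 by apply/eqP; rewrite -mxrank_eq0; apply/eqP.
  have v0 : forall v : 'cV[R]_n, M^T *m v = 0 -> v = 0.
    move=> v hv.
    suff h2 : v^T = 0 by rewrite -[v]trmxK h2 trmx0.
    have h1 : (v^T <= kermx M)%MS.
      apply/sub_kermxP.
      have -> : v^T *m M = (M^T *m v)^T by rewrite trmx_mul trmxK.
      by rewrite hv trmx0.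
    by rewrite hk in h1; exact: submx0null h1.
  exists (expv (E^T *m w y0 + 0)).
  rewrite part1; apply/seteqP; split => x /=.
    move=> [y [v [hy [/orthE hv ->]]]]; rewrite PhiE; last exact: (posP _ hy.1).
    by rewrite (Puniq y y0) // (v0 v hv).
  move=> ->; exists y0, 0; split => //; split; first by apply/orthE; rewrite mulmx0.
  by rewrite PhiE //; exact: (posP _ hy0.1).
Qed.
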